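(* Let $k$ be a positive integer. (a) For $n \ge 1$, $\dim_{k,f}(P_n+K_1)=\dim_f(P_n+K_1)$, and this common value equals $\frac{n+1}{2}$ if $n \in\{1,2,3\}$; $\frac{5}{3}$ if $n \in \{4,5\}$; $\frac{n+1}{4}$ if $n \ge 6$ and $n\equiv 1$ or $3\pmod 4$; and $\frac{n+2}{4}$ if $n \ge 6$ and $n\equiv 2\pmod4$. (b) If $n\ge 8$ and $n\equiv 0 \pmod4$, then $\frac{n}{4} \le \dim_{k,f}(P_n+K_1)=\dim_f(P_n+K_1)\le \frac{n+2}{4}$.
   Context: $P_n$ is the path on $n$ vertices, $K_1$ a single vertex, and $G+H$ denotes the join (disjoint union plus all edges between the two graphs). $d(x,y)$ is the distance in $G$. For a function $g$ on $V(G)$ and $U\subseteq V(G)$, $g(U)=\sum_{s\in U}g(s)$. $R\{x,y\}=\{z\in V(G): d(x,z)\ne d(y,z)\}$; a function $g:V(G)\to[0,1]$ is a resolving function if $g(R\{x,y\})\ge1$ for all distinct $x,y$, and $\dim_f(G)$ is the minimum of $g(V(G))$ over resolving functions. For a positive integer $k$, $d_k(x,y)=\min\{d(x,y),k+1\}$, $R_k\{x,y\}=\{z: d_k(x,z)\neq d_k(y,z)\}$; $h:V(G)\to[0,1]$ is a $k$-truncated resolving function if $h(R_k\{x,y\})\ge 1$ for all distinct $x,y$, and $\dim_{k,f}(G)$ is the minimum of $h(V(G))$ over such $h$. *)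

(* Defs.v *)
From mathcomp Require Import all_boot all_order all_algebra.
Set Implicit Arguments. Unset Strict Implicit. Unset Printing Implicit Defensive.
Import Order.TTheory GRing.Theory Num.Theory.

(* A (simple) graph is a symmetric irreflexive relation e on a finite type T. *)

Definition ball (T : finType) (e : rel T) (k : nat) (x : T) : {set T} :=
  iter k (fun S => S :|: [set y | [exists z in S, e z y]]) [set x].

(* Graph distance: least k with y in ball k x (falls back to #|T| if y is
   unreachable; irrelevant for the connected graphs considered here). *)
Definition gdist (T : finType) (e : rel T) (x y : T) : nat :=
  find (fun k => y \in ball e k x) (iota 0 #|T|).

Definition tdist (T : finType) (e : rel T) (k : nat) (x y : T) : nat :=
  minn (gdist e x y) k.+1.

Definition resolving_set (T : finType) (d : T -> T -> nat) (x y : T) : {set T} :=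
  [set z | d x z != d y z].

Local Open Scope ring_scope.

Definition resolving_fun (R : realFieldType) (T : finType)
    (d : T -> T -> nat) (g : T -> R) : Prop :=
  (forall s, 0 <= g s <= 1) /\
  (forall x y, x != y -> 1 <= \sum_(z in resolving_set d x y) g z).

Definition is_min_resolving (R : realFieldType) (T : finType)
    (d : T -> T -> nat) (r : R) : Prop :=
  (exists g : T -> R, resolving_fun d g /\ \sum_z g z = r) /\
  (forall g : T -> R, resolving_fun d g -> r <= \sum_z g z).

Definition frac_dim (R : realFieldType) (T : finType) (e : rel T) (r : R) : Prop :=
  is_min_resolving (gdist e) r.

Definition trunc_frac_dim (R : realFieldType) (T : finType) (e : rel T)
    (k : nat) (r : R) : Prop :=
  is_min_resolving (tdist e k) r.

Definition path_rel (n : nat) : rel 'I_n :=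
  fun i j => (i.+1 == j :> nat) || (j.+1 == i :> nat).

Definition K1_rel : rel 'I_1 := fun _ _ => false.

Definition join_rel (T1 T2 : finType) (e1 : rel T1) (e2 : rel T2) : rel (T1 + T2)%type :=
  fun a b => match a, b with
             | inl x, inl y => e1 x y
             | inr x, inr y => e2 x y
             | _, _ => true
             end.

Arguments path_rel : clear implicits.
Definition PnK1 (n : nat) : rel ('I_n + 'I_1)%type := join_rel (@path_rel n) K1_rel.

Definition both_dims (R : realFieldType) (n k : nat) (r : R) : Prop :=
  trunc_frac_dim (@PnK1 n) k r /\ frac_dim (@PnK1 n) r.

(* Main.v *)
Require Import Defs.
From mathcomp Require Import all_boot all_order all_algebra.
From mathcomp Require Import zify ring lra.
Import Order.TTheory GRing.Theory Num.Theory.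
Set Implicit Arguments. Unset Strict Implicit. Unset Printing Implicit Defensive.

Section Fan.
Variable n : nat.
Notation T := ('I_n + 'I_1)%type.
Definition hub : T := inr ord0.
Definition pv (i : nat) : T := if insub i is Some j then inl j else hub.
Definition dd (a i : nat) : nat :=
  if a == i then 0 else if (a.+1 == i) || (i.+1 == a) then 1 else 2.
Definition fd (x y : T) : nat := if x == y then 0 else if PnK1 x y then 1 else 2.

Lemma pvK (j : 'I_n) : pv j = inl j.
Proof. by rewrite /pv valK. Qed.

Lemma pvE a (Ha : a < n) : pv a = inl (Ordinal Ha).
Proof. by rewrite -pvK. Qed.

Lemma fd_pv a i : a < n -> i < n -> fd (pv a) (pv i) = dd a i.
Proof.
move=> Ha Hi; rewrite (pvE Ha) (pvE Hi) /fd /dd /=.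
by [].
Qed.

Lemma fd_pvh a : a < n -> fd (pv a) hub = 1.
Proof. by move=> Ha; rewrite (pvE Ha). Qed.
Lemma fd_hpv a : a < n -> fd hub (pv a) = 1.
Proof. by move=> Ha; rewrite (pvE Ha). Qed.
Lemma fd_hh : fd hub hub = 0.
Proof. by rewrite /fd eqxx. Qed.

Lemma ball0 (x y : T) : (y \in ball (@PnK1 n) 0 x) = (y == x).
Proof. by rewrite /ball /= inE. Qed.

Lemma ball1 (x y : T) : (y \in ball (@PnK1 n) 1 x) = (y == x) || @PnK1 n x y.
Proof.
rewrite /ball /= !inE; congr (_ || _).
apply/existsP/idP => [[z /andP [] ]|h]; first by rewrite inE => /eqP ->.
by exists x; rewrite inE eqxx.
Qed.

Lemma ball2 (x y : T) : y \in ball (@PnK1 n) 2 x.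
Proof.
have -> : ball (@PnK1 n) 2 x = ball (@PnK1 n) 1 x :|:
   [set y | [exists z in ball (@PnK1 n) 1 x, @PnK1 n z y]] by [].
rewrite in_setU inE; case: y => [i'|j'].
  apply/orP; right; apply/existsP; exists hub; rewrite ball1 andbT.
  by case: x => [i|j] //=; rewrite /hub (ord1 j) eqxx.
apply/orP; left; rewrite ball1.
by case: x => [i|j] //=; rewrite (ord1 j) (ord1 j') eqxx.
Qed.

Lemma small_adj (x y : T) : n <= 1 -> x != y -> @PnK1 n x y.
Proof.
move=> Hn; case: x => [i|j]; case: y => [i'|j'] //=.
- move=> h; exfalso; move/negP: h; apply; apply/eqP; congr inl; apply/val_inj.
  by have:= ltn_ord i; have:= ltn_ord i'; rewrite /=; lia.
- by rewrite (ord1 j) (ord1 j') eqxx.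
Qed.

Lemma neq_pos (x y : T) : x != y -> 0 < n.
Proof.
case: x => [i|j]; first by move=> _; apply: leq_ltn_trans (ltn_ord i).
case: y => [i|j']; first by move=> _; apply: leq_ltn_trans (ltn_ord i).
by rewrite (ord1 j) (ord1 j') eqxx.
Qed.

Lemma gdist_fd (x y : T) : gdist (@PnK1 n) x y = fd x y.
Proof.
rewrite /gdist /fd card_sum !card_ord addn1.
have [->|nxy] := eqVneq x y; first by rewrite /= ball0 eqxx.
have Hn := neq_pos nxy.
have nyx : (y == x) = false by rewrite eq_sym (negbTE nxy).
case E: (@PnK1 n x y).
  rewrite (_ : n.+1 = n.-1.+2); last by lia.
  by rewrite /= ball0 nyx ball1 E orbT.
have Hn2 : 1 < n.
  by case: (leqP n 1) => // h; rewrite small_adj in E.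
rewrite (_ : n.+1 = (n.-2).+3); last by lia.
by rewrite /= ball0 nyx ball1 E nyx ball2.
Qed.

Lemma fd_le2 x y : fd x y <= 2.
Proof. by rewrite /fd; case: ifP => //; case: ifP. Qed.

Lemma tdist_fd k (x y : T) : 0 < k -> tdist (@PnK1 n) k x y = fd x y.
Proof.
move=> Hk; rewrite /tdist gdist_fd; apply/minn_idPl.
by have := fd_le2 x y; lia.
Qed.

End Fan.

Local Open Scope ring_scope.
Section Sums.
Variable R : realFieldType.

Lemma sum_if1 (f : nat -> R) x N :
  \sum_(0 <= i < N) (if i == x then f i else 0) = if (x < N)%N then f x else 0.
Proof.
elim: N => [|N IH]; first by rewrite big_nil.
rewrite big_nat_recr //= IH.
case: (ltngtP x N) => h.
- by rewrite (_ : (x < N.+1)%N) ?(_ : (N == x) = false) ?addr0 //; lia.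
- by rewrite (_ : (x < N.+1)%N = false) ?(_ : (N == x) = false) ?addr0 //; lia.
- by rewrite h ltnSn add0r.
Qed.

Lemma sum_in n (f : nat -> R) s : (forall i, (n <= i)%N -> f i = 0) -> uniq s ->
  \sum_(0 <= i < n) (if i \in s then f i else 0) = \sum_(i <- s) f i.
Proof.
move=> Hf; elim: s => [|x s IH]; first by rewrite big_nil big1 // => i _.
rewrite /= => /andP [xs us]; rewrite big_cons -IH //.
rewrite (eq_big_nat _ _ (F2 := fun i => (if i == x then f i else 0) +
    (if i \in s then f i else 0))); last first.
  move=> i _; rewrite inE; case: eqP => [->|_]; last by rewrite add0r.
  by rewrite (negbTE xs) addr0.
rewrite big_split /= sum_if1; congr (_ + _).
by case: ltnP => // h; rewrite Hf.
Qed.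

Lemma sum_char n (P : pred nat) (f : nat -> R) s :
  (forall i, (n <= i)%N -> f i = 0) -> uniq s ->
  (forall i, (i < n)%N -> P i = (i \in s)) ->
  \sum_(0 <= i < n) (if P i then f i else 0) = \sum_(i <- s) f i.
Proof.
move=> Hf us HP; rewrite -(sum_in (n:=n)) //; apply: eq_big_nat => i Hi.
by rewrite HP.
Qed.

Lemma sum_ge n (P : pred nat) (f : nat -> R) s :
  (forall i, (n <= i)%N -> f i = 0) -> uniq s ->
  (forall i, (i < n)%N -> 0 <= f i) ->
  (forall i, (i < n)%N -> i \in s -> P i) ->
  \sum_(i <- s) f i <= \sum_(0 <= i < n) (if P i then f i else 0).
Proof.
move=> Hf us Hp HP; rewrite -(sum_in (n:=n)) //; apply: ler_sum_nat => i Hi.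
case E: (i \in s); first by rewrite HP.
by case: (P i) => //; apply: Hp.
Qed.

Lemma sum_le n (P : pred nat) (f : nat -> R) s :
  (forall i, (n <= i)%N -> f i = 0) -> uniq s ->
  (forall i, (i < n)%N -> 0 <= f i) ->
  (forall i, (i < n)%N -> P i -> i \in s) ->
  \sum_(0 <= i < n) (if P i then f i else 0) <= \sum_(i <- s) f i.
Proof.
move=> Hf us Hp HP; rewrite -(sum_in (n:=n)) //; apply: ler_sum_nat => i Hi.
case E: (P i); first by rewrite HP.
by case: (i \in s) => //; apply: Hp.
Qed.

Variable n : nat.
Notation T := ('I_n + 'I_1)%type.
Definition fof (g : T -> R) (i : nat) : R := if (i < n)%N then g (pv n i) else 0.

Lemma fof0 g i : (n <= i)%N -> fof g i = 0.
Proof. by rewrite /fof leqNgt => /negbTE ->. Qed.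

Lemma sumT (g : T -> R) : \sum_z g z = \sum_(0 <= i < n) fof g i + g (hub n).
Proof.
rewrite big_sumType /= big_ord1; congr (_ + _).
by rewrite big_mkord; apply: eq_bigr => i _; rewrite /fof ltn_ord pvK.
Qed.

Lemma sumR (g : T -> R) x y :
  \sum_(z in resolving_set (@fd n) x y) g z =
  \sum_(0 <= i < n) (if fd x (pv n i) != fd y (pv n i) then fof g i else 0) +
  (if fd x (hub n) != fd y (hub n) then g (hub n) else 0).
Proof.
rewrite big_mkcond /= sumT inE; congr (_ + _).
apply: eq_big_nat => i /andP [_ Hi]; rewrite /fof Hi inE.
by case: ifP.
Qed.

End Sums.

Section LB.
Variable R : realFieldType.
Variable n : nat.
Variable f : nat -> R.
Hypothesis Hf0 : forall i, (n <= i)%N -> f i = 0.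
Hypothesis Hfp : forall i, 0 <= f i.
Hypothesis HT : forall a, (1 <= a)%N -> (a.+1 < n)%N ->
  1 <= f a.-1 + f a + f a.+1 + f a.+2.

Lemma sum_ext N : (n <= N)%N -> \sum_(0 <= i < N) f i = \sum_(0 <= i < n) f i.
Proof.
move=> HN; rewrite (big_cat_nat _ (n := n)) //= [X in _ + X]big1_seq ?addr0 //.
by move=> i /andP [_]; rewrite mem_index_iota => /andP [h _]; apply: Hf0.
Qed.

Lemma win s0 t : (s0 + 4 * t <= n.+1)%N ->
  \sum_(0 <= i < s0) f i + t%:R <= \sum_(0 <= i < s0 + 4 * t) f i.
Proof.
elim: t => [|t IH] H; first by rewrite addr0 muln0 addn0.
have H1 : (s0 + 4 * t <= n.+1)%N by lia.
have E : (s0 + 4 * t.+1 = (s0 + 4 * t).+4)%N by lia.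
rewrite E; move: (IH H1); set N := (s0 + 4 * t)%N => IH'.
do 4! rewrite big_nat_recr //=.
have := HT (a := N.+1) isT (ltac:(rewrite /N; lia)); rewrite /= => h.
rewrite -natr1; lra.
Qed.

Hypothesis HT0 : 1 <= f 0 + f 1 + f 2.
Hypothesis HS : forall a, (1 <= a)%N -> (a.+2 < n)%N ->
  1 <= f a.-1 + f a + f a.+2 + f a.+3.
Hypothesis HS0 : 1 <= f 0 + f 2 + f 3.

Lemma sum3 : \sum_(0 <= i < 3) f i = f 0 + f 1 + f 2.
Proof. by rewrite !big_nat_recr //= big_nil add0r. Qed.

Lemma lb3 m : n = (4 * m + 3)%N -> (m + 1)%:R <= \sum_(0 <= i < n) f i.
Proof.
move=> En; have := win (s0 := 3) (t := m) ltac:(lia).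
rewrite sum3 (_ : (3 + 4 * m = n)%N); last by lia.
rewrite addn1 -natr1; move=> hw; apply: le_trans hw. have h0 : 1 <= f 0 + f 1 + f 2 := HT0. lra.
Qed.

Lemma lb2 m : n = (4 * m + 2)%N -> (m + 1)%:R <= \sum_(0 <= i < n) f i.
Proof.
move=> En; have := win (s0 := 3) (t := m) ltac:(lia).
rewrite sum3 sum_ext; last by lia.
rewrite addn1 -natr1; move=> hw; apply: le_trans hw.
have h0 : 1 <= f 0 + f 1 + f 2 := HT0. lra.
Qed.

Lemma lb1 m : (2 <= m)%N -> n = (4 * m + 1)%N -> m%:R + 1 / 2 <= \sum_(0 <= i < n) f i.
Proof.
move=> Hm En; have := win (s0 := 6) (t := m.-1) ltac:(lia).
rewrite (sum_ext (N := (6 + 4 * m.-1)%N)); last by lia.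
have E6 : \sum_(0 <= i < 6) f i = f 0 + f 1 + f 2 + f 3 + f 4 + f 5.
  by rewrite !big_nat_recr //= big_nil add0r.
have h1 : 1 <= f 0 + f 1 + f 3 + f 4 := HS (a := 1) isT ltac:(lia).
have h2 : 1 <= f 2 + f 3 + f 4 + f 5 := HT (a := 3) isT ltac:(lia).
have h0 : 1 <= f 0 + f 1 + f 2 := HT0.
have p5 : 0 <= f 5 := Hfp 5.
have Em : m%:R = (m.-1)%:R + 1 :> R by rewrite natr1; congr (_%:R); lia.
rewrite E6 Em /= => hw; lra.
Qed.

Lemma lb0 m : (2 <= m)%N -> n = (4 * m)%N ->
  m%:R * ((2 * m + 1)%:R + 1) <= (2 * m + 1)%:R * \sum_(0 <= i < n) f i.
Proof.
move=> Hm En.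
set Q : R := (2 * m + 1)%:R.
have HQ : 3 <= Q by rewrite /Q ler_nat; lia.
have J : forall c, (c < m)%N -> (c%:R + 1) * (Q + 1) <=
    Q * \sum_(0 <= i < 4 * c + 3) f i + (2 * c%:R + 3) * f (4 * c + 3)%N
    + (2 * c%:R + 2) * f (4 * c + 4)%N.
  elim=> [|c IH] Hc.
    rewrite (_ : (4 * 0 + 3 = 3)%N) // (_ : (4 * 0 + 4 = 4)%N) // sum3.
    have h0 : 1 <= f 0 + f 1 + f 2 := HT0.
    have h1 : 1 <= f 1 + f 2 + f 3 + f 4 := HT (a := 2) isT ltac:(lia).
    have h2 : 1 <= f 0 + f 2 + f 3 := HS0.
    have h3 : 1 <= f 0 + f 1 + f 3 + f 4 := HS (a := 1) isT ltac:(lia).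
    have p : 0 <= (Q - 2) * (f 0 + f 1 + f 2 - 1).
      by apply: mulr_ge0; lra.
    lra.
  have {IH} IH := IH (ltnW Hc).
  move: IH; set N := (4 * c + 3)%N => IH.
  rewrite (_ : (4 * c.+1 + 3 = N.+4)%N); last by rewrite /N; lia.
  rewrite (_ : (4 * c.+1 + 4 = N.+4.+1)%N); last by rewrite /N; lia.
  rewrite (_ : (4 * c + 4 = N.+1)%N) in IH; last by rewrite /N; lia.
  do 4! rewrite big_nat_recr //=.
  have hT1 : 1 <= f N + f N.+1 + f N.+2 + f N.+3 := HT (a := N.+1) isT ltac:(rewrite /N; lia).
  have hT2 : 1 <= f N.+2 + f N.+3 + f N.+4 + f N.+4.+1 := HT (a := N.+3) isT ltac:(rewrite /N; lia).
  have hS1 : 1 <= f N + f N.+1 + f N.+3 + f N.+4 := HS (a := N.+1) isT ltac:(rewrite /N; lia).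
  have hS2 : 1 <= f N.+1 + f N.+2 + f N.+4 + f N.+4.+1 := HS (a := N.+2) isT ltac:(rewrite /N; lia).
  have Hc' : (c.+1)%:R + 1 <= m%:R :> R by rewrite natr1 ler_nat.
  have EQ : Q = 2 * m%:R + 1 by rewrite /Q natrD natrM.
  have p1 : 0 <= (Q - 4 - 2 * c%:R) * (f N + f N.+1 + f N.+2 + f N.+3 - 1).
    apply: mulr_ge0; last by lra.
    rewrite -natr1 in Hc'; lra.
  have p2 : 0 <= (2 * c%:R + 3) * (f N.+2 + f N.+3 + f N.+4 + f N.+4.+1 - 1).
    by apply: mulr_ge0; [have : 0 <= c%:R :> R by [] |]; lra.
  rewrite -natr1; lra.
have := J m.-1 ltac:(lia).
rewrite (_ : (4 * m.-1 + 3 = n.-1)%N); last by lia.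
rewrite (_ : (4 * m.-1 + 4 = n)%N); last by lia.
rewrite (Hf0 (i := n)) // mulr0 addr0.
have -> : \sum_(0 <= i < n) f i = \sum_(0 <= i < n.-1) f i + f n.-1.
  by rewrite -big_nat_recr //; congr (\sum_(0 <= i < _) _); lia.
have Em : m%:R = m.-1%:R + 1 :> R by rewrite natr1; congr (_%:R); lia.
have EQ : Q = 2 * m.-1%:R + 3 by rewrite /Q natrD natrM Em; ring.
rewrite -/Q Em EQ => h; lra.
Qed.

End LB.

Ltac ddsolve := rewrite /dd ?inE; repeat case: ifP; move=> *; lia.
Ltac ddeq := apply/idP/idP; ddsolve.

Section Cons.
Variable R : realFieldType.
Variable n : nat.
Notation T := ('I_n + 'I_1)%type.
Variable g : T -> R.
Hypothesis Hg : resolving_fun (@fd n) g.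

Lemma Fp i : 0 <= fof g i.
Proof.
rewrite /fof; case: ifP => // _; case: Hg => H _.
by case/andP: (H (pv n i)).
Qed.

Lemma ghub_ge0 : 0 <= g (hub n).
Proof. by case: Hg => H _; case/andP: (H (hub n)). Qed.

Lemma pv_neq a b : (a < n)%N -> (b < n)%N -> a != b -> pv n a != pv n b.
Proof.
move=> Ha Hb ab; rewrite (pvE Ha) (pvE Hb); apply/eqP => -[] h.
by rewrite h eqxx in ab.
Qed.

Lemma pv_hub a : (a < n)%N -> pv n a != hub n.
Proof. by move=> Ha; rewrite (pvE Ha). Qed.

Lemma cons_path a b : (a < n)%N -> (b < n)%N -> a != b ->
  1 <= \sum_(0 <= i < n) (if dd a i != dd b i then fof g i else 0).
Proof.
move=> Ha Hb ab; case: Hg => _ H; have := H _ _ (pv_neq Ha Hb ab).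
rewrite sumR (fd_pvh Ha) (fd_pvh Hb) eqxx addr0.
suff -> : \sum_(0 <= i < n) (if fd (pv n a) (pv n i) != fd (pv n b) (pv n i) then fof g i else 0)
  = \sum_(0 <= i < n) (if dd a i != dd b i then fof g i else 0) by [].
by apply: eq_big_nat => i /andP [_ Hi]; rewrite !fd_pv.
Qed.

Lemma cons_hub a : (a < n)%N ->
  1 <= \sum_(0 <= i < n) (if dd a i != 1%N then fof g i else 0) + g (hub n).
Proof.
move=> Ha; case: Hg => _ H; have := H _ _ (pv_hub Ha).
rewrite sumR (fd_pvh Ha) fd_hh /=.
suff -> : \sum_(0 <= i < n) (if fd (pv n a) (pv n i) != fd (hub n) (pv n i) then fof g i else 0)
  = \sum_(0 <= i < n) (if dd a i != 1%N then fof g i else 0) by [].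
by apply: eq_big_nat => i /andP [_ Hi]; rewrite fd_pv // fd_hpv.
Qed.

Let F := fof g.

Lemma cT a : (1 <= a)%N -> (a.+1 < n)%N -> 1 <= F a.-1 + F a + F a.+1 + F a.+2.
Proof.
move=> H1 H2; have := cons_path (ltnW H2) H2 ltac:(by rewrite ltn_eqF).
rewrite (sum_char (s := [:: a.-1; a; a.+1; a.+2])) //; first last.
- by move=> i _; ddeq.
- by rewrite /= !inE; lia.
- exact: fof0.
by rewrite !big_cons big_nil /F; lra.
Qed.

End Cons.

Section Cons2.
Variable R : realFieldType.
Variable n : nat.
Notation T := ('I_n + 'I_1)%type.
Variable g : T -> R.
Hypothesis Hg : resolving_fun (@fd n) g.
Let F := fof g.

Lemma cT0 : (2 <= n)%N -> 1 <= F 0 + F 1 + F 2.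
Proof.
move=> H2; have := cons_path Hg (a := 0) (b := 1) ltac:(lia) H2 isT.
rewrite (sum_char (s := [:: 0; 1; 2]%N)) //; first last.
- by move=> i _; ddeq.
- exact: fof0.
by rewrite !big_cons big_nil /F; lra.
Qed.

Lemma cS a : (1 <= a)%N -> (a.+2 < n)%N -> 1 <= F a.-1 + F a + F a.+2 + F a.+3.
Proof.
move=> H1 H2; have := cons_path Hg (a := a) (b := a.+2) ltac:(lia) H2 ltac:(by rewrite ltn_eqF).
rewrite (sum_char (s := [:: a.-1; a; a.+2; a.+3])) //; first last.
- by move=> i _; ddeq.
- by rewrite /= !inE; lia.
- exact: fof0.
by rewrite !big_cons big_nil /F; lra.
Qed.

Lemma cS0 : (3 <= n)%N -> 1 <= F 0 + F 2 + F 3.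
Proof.
move=> H2; have := cons_path Hg (a := 0) (b := 2) ltac:(lia) H2 isT.
rewrite (sum_char (s := [:: 0; 2; 3]%N)) //; first last.
- by move=> i _; ddeq.
- exact: fof0.
by rewrite !big_cons big_nil /F; lra.
Qed.

Lemma sum_geF : \sum_(0 <= i < n) F i <= \sum_z g z.
Proof. by rewrite sumT lerDl ghub_ge0. Qed.

End Cons2.

Section Primal.
Variable R : realFieldType.
Variable n : nat.
Notation T := ('I_n + 'I_1)%type.
Variables (h : nat -> R) (hv : R).
Definition gmk : T -> R := fun z => match z with inl i => h i | inr _ => hv end.
Definition Fh i := if (i < n)%N then h i else 0.

Lemma fof_gmk i : fof gmk i = Fh i.
Proof. by rewrite /fof /Fh; case: ifP => // Hi; rewrite (pvE Hi). Qed.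

Lemma sum_gmk : \sum_z gmk z = \sum_(0 <= i < n) h i + hv.
Proof.
rewrite sumT; congr (_ + _); apply: eq_big_nat => i /andP [_ Hi].
by rewrite fof_gmk /Fh Hi.
Qed.

Lemma gmk_res :
  (forall i, (i < n)%N -> 0 <= h i <= 1) -> 0 <= hv <= 1 ->
  (forall a b, (a < b)%N -> (b < n)%N ->
     1 <= \sum_(0 <= i < n) (if dd a i != dd b i then Fh i else 0)) ->
  (forall a, (a < n)%N ->
     1 <= \sum_(0 <= i < n) (if dd a i != 1%N then Fh i else 0) + hv) ->
  resolving_fun (@fd n) gmk.
Proof.
move=> Hb Hhv Hp Hh; split; first by case => [i|j] //=; apply: Hb.
have E x y : \sum_(0 <= i < n) (if fd x (pv n i) != fd y (pv n i) then fof gmk i else 0)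
   = \sum_(0 <= i < n) (if fd x (pv n i) != fd y (pv n i) then Fh i else 0).
  by apply: eq_big_nat => i _; rewrite fof_gmk.
have Ep a b : (a < n)%N -> (b < n)%N ->
   \sum_(0 <= i < n) (if fd (pv n a) (pv n i) != fd (pv n b) (pv n i) then Fh i else 0)
   = \sum_(0 <= i < n) (if dd a i != dd b i then Fh i else 0).
  by move=> Ha Hb'; apply: eq_big_nat => i /andP [_ Hi]; rewrite !fd_pv.
have Eh a : (a < n)%N ->
   \sum_(0 <= i < n) (if fd (pv n a) (pv n i) != fd (hub n) (pv n i) then Fh i else 0)
   = \sum_(0 <= i < n) (if dd a i != 1%N then Fh i else 0).
  by move=> Ha; apply: eq_big_nat => i /andP [_ Hi]; rewrite fd_pv // fd_hpv.
have Eh' a : (a < n)%N ->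
   \sum_(0 <= i < n) (if fd (hub n) (pv n i) != fd (pv n a) (pv n i) then Fh i else 0)
   = \sum_(0 <= i < n) (if dd a i != 1%N then Fh i else 0).
  move=> Ha; apply: eq_big_nat => i /andP [_ Hi]; by rewrite fd_pv // fd_hpv // eqtype.eq_sym.
have Hsym a b : (a < n)%N -> (b < n)%N -> a != b ->
   1 <= \sum_(0 <= i < n) (if dd a i != dd b i then Fh i else 0).
  move=> Ha Hb' ab; case: (ltngtP a b) => hab; first by apply: Hp.
  - rewrite (eq_big_nat _ _ (F2 := fun i => if dd b i != dd a i then Fh i else 0)).
      by apply: Hp.
    by move=> i _; rewrite eqtype.eq_sym.
  - by rewrite hab eqxx in ab.
move=> x y; rewrite sumR E.
case: x => [i|j]; case: y => [i'|j'] xy.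
- rewrite -!pvK in xy *; rewrite (fd_pvh (ltn_ord i)) (fd_pvh (ltn_ord i')) eqxx addr0.
  rewrite Ep //; apply: Hsym => //; apply: contra xy => /eqP ->; by [].
- rewrite (ord1 j') -/(hub n) -pvK (fd_pvh (ltn_ord i)) fd_hh /=.
  by rewrite Eh //; apply: Hh.
- rewrite (ord1 j) -/(hub n) -pvK (fd_pvh (ltn_ord i')) fd_hh /=.
  by rewrite Eh' //; apply: Hh.
- by rewrite (ord1 j) (ord1 j') eqxx in xy.
Qed.

End Primal.

Section Windows.
Variable R : realFieldType.
Variable n : nat.
Variable f : nat -> R.
Hypothesis Hf0 : forall i, (n <= i)%N -> f i = 0.
Hypothesis Hfp : forall i, 0 <= f i.

Lemma via (P : pred nat) s : uniq s -> (forall i, (i < n)%N -> i \in s -> P i) ->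
  1 <= \sum_(i <- s) f i -> 1 <= \sum_(0 <= i < n) (if P i then f i else 0).
Proof.
move=> us HP h; apply: le_trans h _; apply: sum_ge => //.
Qed.

Hypothesis PW : forall a, (1 <= a)%N -> (a.+1 < n)%N -> 1 <= f a.-1 + f a + f a.+1 + f a.+2.
Hypothesis PW0 : 1 <= f 0 + f 1 + f 2.
Hypothesis PS : forall a, (1 <= a)%N -> (a.+2 < n)%N -> 1 <= f a.-1 + f a + f a.+2 + f a.+3.
Hypothesis PS0 : 1 <= f 0 + f 2 + f 3.
Hypothesis PN : forall a b, (1 <= a)%N -> (a.+3 <= b)%N -> (b < n)%N ->
  1 <= f a.-1 + f a + f a.+1 + f b.-1 + f b + f b.+1.
Hypothesis PN0 : forall b, (3 <= b)%N -> (b < n)%N -> 1 <= f 0 + f 1 + f b.-1 + f b + f b.+1.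

Lemma pairs_ok a b : (a < b)%N -> (b < n)%N ->
  1 <= \sum_(0 <= i < n) (if dd a i != dd b i then f i else 0).
Proof.
move=> ab bn.
have [eb|nb1] := eqVneq b a.+1.
  subst b.
  have [a0|a1] := posnP a.
    subst a; apply: (via (s := [:: 0; 1; 2]%N)) => //; first by move=> i _; ddsolve.
    have h : 1 <= f 0 + f 1 + f 2 := PW0.
    by rewrite !big_cons big_nil; lra.
  apply: (via (s := [:: a.-1; a; a.+1; a.+2])); first by rewrite /= !inE; lia.
    by move=> i _; ddsolve.
  have h : 1 <= f a.-1 + f a + f a.+1 + f a.+2 := PW a1 bn.
  by rewrite !big_cons big_nil; lra.
have [eb|nb2] := eqVneq b a.+2.
  subst b.
  have [a0|a1] := posnP a.
    subst a; apply: (via (s := [:: 0; 2; 3]%N)) => //; first by move=> i _; ddsolve.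
    have h : 1 <= f 0 + f 2 + f 3 := PS0.
    by rewrite !big_cons big_nil; lra.
  apply: (via (s := [:: a.-1; a; a.+2; a.+3])); first by rewrite /= !inE; lia.
    by move=> i _; ddsolve.
  have h : 1 <= f a.-1 + f a + f a.+2 + f a.+3 := PS a1 bn.
  by rewrite !big_cons big_nil; lra.
have b3 : (a.+3 <= b)%N by lia.
have [a0|a1] := posnP a.
  subst a; apply: (via (s := [:: 0; 1; b.-1; b; b.+1]%N)); first by rewrite /= !inE; lia.
    by move=> i _; ddsolve.
  have h : 1 <= f 0 + f 1 + f b.-1 + f b + f b.+1 := PN0 b3 bn.
  by rewrite !big_cons big_nil; lra.
apply: (via (s := [:: a.-1; a; a.+1; b.-1; b; b.+1]%N)); first by rewrite /= !inE; lia.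
  by move=> i _; ddsolve.
have h : 1 <= f a.-1 + f a + f a.+1 + f b.-1 + f b + f b.+1 := PN a1 b3 bn.
by rewrite !big_cons big_nil; lra.
Qed.

Lemma hub_ok a hv : (8 <= n)%N -> (a < n)%N -> 0 <= hv ->
  1 <= \sum_(0 <= i < n) (if dd a i != 1%N then f i else 0) + hv.
Proof.
move=> n8 an hv0.
suff : 1 <= \sum_(0 <= i < n) (if dd a i != 1%N then f i else 0) by move=> h; lra.
case: (ltnP a.+4 n) => h1.
  apply: (via (s := [:: a.+2; a.+3; a.+4; a.+4.+1])); first by rewrite /= !inE; lia.
    by move=> i _; ddsolve.
  have h : 1 <= f a.+3.-1 + f a.+3 + f a.+3.+1 + f a.+3.+2 := PW (a := a.+3) isT h1.
  by rewrite !big_cons big_nil; move: h => /=; lra.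
case: (ltnP 4 a) => h2.
  apply: (via (s := [:: a - 5; a - 4; a - 3; a - 2]%N)); first by rewrite /= !inE; lia.
    by move=> i _; ddsolve.
  have h : 1 <= f (a - 4).-1 + f (a - 4) + f (a - 4).+1 + f (a - 4).+2 :=
    PW (a := a - 4) ltac:(lia) ltac:(lia).
  have e1 : (a - 4).-1 = (a - 5)%N by lia.
  have e2 : (a - 4).+1 = (a - 3)%N by lia.
  have e3 : (a - 4).+2 = (a - 2)%N by lia.
  rewrite e3 e2 e1 in h.
  by rewrite !big_cons big_nil; lra.
have a4 : a = 4%N by lia.
subst a; apply: (via (s := [:: 0; 1; 2]%N)) => //; first by move=> i _; ddsolve.
have h : 1 <= f 0 + f 1 + f 2 := PW0.
by rewrite !big_cons big_nil; lra.
Qed.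

End Windows.

Section Lift.
Variable R : realFieldType.
Variables (n D : nat) (hb : nat -> nat).
Hypothesis D0 : (0 < D)%N.
Definition hN i := if (i < n)%N then hb i else 0%N.
Definition hR (i : nat) : R := (hb i)%:R / D%:R.

Lemma FhE i : Fh n hR i = (hN i)%:R / D%:R.
Proof. by rewrite /Fh /hN; case: ifP => //; rewrite mul0r. Qed.

Lemma ge1 x : (D <= x)%N -> 1 <= x%:R / D%:R :> R.
Proof.
move=> h; have D0' : 0 < D%:R :> R by rewrite ltr0n.
by rewrite ler_pdivlMr // mul1r ler_nat.
Qed.

Lemma lift3 a b c : (D <= hN a + hN b + hN c)%N -> 1 <= Fh n hR a + Fh n hR b + Fh n hR c.
Proof. by move=> h; rewrite !FhE -!mulrDl -!natrD; apply: ge1. Qed.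
Lemma lift4 a b c d : (D <= hN a + hN b + hN c + hN d)%N ->
  1 <= Fh n hR a + Fh n hR b + Fh n hR c + Fh n hR d.
Proof. by move=> h; rewrite !FhE -!mulrDl -!natrD; apply: ge1. Qed.
Lemma lift5 a b c d e : (D <= hN a + hN b + hN c + hN d + hN e)%N ->
  1 <= Fh n hR a + Fh n hR b + Fh n hR c + Fh n hR d + Fh n hR e.
Proof. by move=> h; rewrite !FhE -!mulrDl -!natrD; apply: ge1. Qed.
Lemma lift6 a b c d e f : (D <= hN a + hN b + hN c + hN d + hN e + hN f)%N ->
  1 <= Fh n hR a + Fh n hR b + Fh n hR c + Fh n hR d + Fh n hR e + Fh n hR f.
Proof. by move=> h; rewrite !FhE -!mulrDl -!natrD; apply: ge1. Qed.

Lemma Fh0 i : (n <= i)%N -> Fh n hR i = 0.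
Proof. by rewrite /Fh leqNgt => /negbTE ->. Qed.
Lemma Fhp i : 0 <= Fh n hR i.
Proof. by rewrite FhE; apply: divr_ge0; apply: ler0n. Qed.

Lemma sum_hR : \sum_(0 <= i < n) hR i = (\sum_(0 <= i < n) hb i)%:R / D%:R.
Proof. by rewrite natr_sum mulr_suml. Qed.

Lemma hR_bnd i : (hb i <= D)%N -> 0 <= hR i <= 1.
Proof.
move=> h; have D0' : 0 < D%:R :> R by rewrite ltr0n.
rewrite divr_ge0 ?ler0n //= ler_pdivrMr // mul1r ler_nat //.
Qed.

Hypothesis NW : forall a, (1 <= a)%N -> (a.+1 < n)%N -> (D <= hN a.-1 + hN a + hN a.+1 + hN a.+2)%N.
Hypothesis NW0 : (D <= hN 0 + hN 1 + hN 2)%N.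
Hypothesis NS : forall a, (1 <= a)%N -> (a.+2 < n)%N -> (D <= hN a.-1 + hN a + hN a.+2 + hN a.+3)%N.
Hypothesis NS0 : (D <= hN 0 + hN 2 + hN 3)%N.
Hypothesis NB : forall a, (1 <= a)%N -> (a < n)%N -> (D <= 2 * (hN a.-1 + hN a + hN a.+1))%N.
Hypothesis NB0 : (D <= 2 * (hN 0 + hN 1))%N.
Hypothesis Nbnd : forall i, (i < n)%N -> (hb i <= D)%N.
Lemma hub_via a s : uniq s -> (forall i, (i < n)%N -> i \in s -> dd a i != 1%N) ->
  (D <= \sum_(i <- s) hN i)%N ->
  1 <= \sum_(0 <= i < n) (if dd a i != 1%N then Fh n hR i else 0) + 0.
Proof.
move=> us Hs HD; rewrite addr0; apply: (@via _ n _ Fh0 Fhp _ s us Hs).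
have -> : \sum_(i <- s) Fh n hR i = (\sum_(i <- s) hN i)%:R / D%:R.
  by rewrite natr_sum mulr_suml; apply: eq_bigr => i _; rewrite FhE.
exact: ge1.
Qed.

Lemma hub8 : (8 <= n)%N -> forall a, (a < n)%N ->
  1 <= \sum_(0 <= i < n) (if dd a i != 1%N then Fh n hR i else 0) + 0.
Proof.
move=> n8 a an; apply: hub_ok => //; try exact: Fh0; try exact: Fhp; try exact: lift3.
by move=> a' h1 h2; apply: lift4; apply: NW.
Qed.

Hypothesis HH : forall a, (a < n)%N ->
  1 <= \sum_(0 <= i < n) (if dd a i != 1%N then Fh n hR i else 0) + 0.

Lemma inst_res : resolving_fun (@fd n) (gmk hR 0).
Proof.
apply: gmk_res.
- by move=> i /Nbnd; apply: hR_bnd.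
- by rewrite lexx ler01.
- move=> a b ab bn; apply: pairs_ok => //.
  + exact: Fh0.
  + exact: Fhp.
  + by move=> a' h1 h2; apply: lift4; apply: NW.
  + exact: lift3.
  + by move=> a' h1 h2; apply: lift4; apply: NS.
  + exact: lift3.
  + move=> a' b' h1 h2 h3; apply: lift6.
    have := NB h1 ltac:(lia).
    have := NB (a := b') ltac:(lia) h3; lia.
  + move=> b' h2 h3; apply: lift5.
    have := NB (a := b') ltac:(lia) h3; lia.
- exact: HH.
Qed.

Lemma inst_sum : \sum_z gmk (n := n) hR 0 z = (\sum_(0 <= i < n) hb i)%:R / D%:R.
Proof. by rewrite sum_gmk addr0 sum_hR. Qed.

End Lift.

Lemma min_ext (R : realFieldType) (T : finType) (d1 d2 : T -> T -> nat) (r : R) :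
  (forall x y, d1 x y = d2 x y) -> is_min_resolving d2 r -> is_min_resolving d1 r.
Proof.
move=> E.
have ES x y : resolving_set d1 x y = resolving_set d2 x y.
  by apply/setP => z; rewrite !inE !E.
have EF g : resolving_fun d1 g <-> resolving_fun d2 g.
  by rewrite /resolving_fun; split => -[h1 h2]; split => // x y xy;
     [rewrite -ES | rewrite ES]; apply: h2.
case=> [[g0 [Hg Hs]] Hl]; split; first by exists g0; split => //; apply/EF.
by move=> g /EF; apply: Hl.
Qed.

Lemma both_of (R : realFieldType) n k (r : R) : (0 < k)%N ->
  is_min_resolving (@fd n) r -> both_dims n k r.
Proof.
move=> Hk H; split; apply: min_ext H => x y.
- exact: tdist_fd.
- exact: gdist_fd.
Qed.

Lemma min_of (R : realFieldType) n (g0 : ('I_n + 'I_1)%type -> R) (r : R) :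
  resolving_fun (@fd n) g0 -> \sum_z g0 z = r ->
  (forall g, resolving_fun (@fd n) g -> r <= \sum_(0 <= i < n) fof g i) ->
  is_min_resolving (@fd n) r.
Proof.
move=> H0 S0 HL; split; first by exists g0.
move=> g Hg; apply: le_trans (HL g Hg) _; exact: sum_geF.
Qed.

Local Close Scope ring_scope.
Ltac natsolve := rewrite /hN; repeat case: ifP; move=> *; lia.

Section FamZ.
Variables m : nat.
Hypothesis Hm : (2 <= m)%N.
Definition hbZ i := if odd i then (i %/ 4 + 1)%N else (m - i %/ 4)%N.
Notation n := (4 * m)%N.
Notation hN := (hN n hbZ).
Notation D := (2 * m + 1)%N.
Lemma Z_NW a : (1 <= a)%N -> (a.+1 < n)%N -> (D <= hN a.-1 + hN a + hN a.+1 + hN a.+2)%N.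
Proof. move=> *; rewrite /hbZ; natsolve. Qed.
Lemma Z_NS a : (1 <= a)%N -> (a.+2 < n)%N -> (D <= hN a.-1 + hN a + hN a.+2 + hN a.+3)%N.
Proof. move=> *; rewrite /hbZ; natsolve. Qed.
Lemma Z_NB a : (1 <= a)%N -> (a < n)%N -> (D <= 2 * (hN a.-1 + hN a + hN a.+1))%N.
Proof. move=> *; rewrite /hbZ; natsolve. Qed.
Lemma Z_NW0 : (D <= hN 0 + hN 1 + hN 2)%N.
Proof. rewrite /hbZ; natsolve. Qed.
Lemma Z_NS0 : (D <= hN 0 + hN 2 + hN 3)%N.
Proof. rewrite /hbZ; natsolve. Qed.
Lemma Z_NB0 : (D <= 2 * (hN 0 + hN 1))%N.
Proof. rewrite /hbZ; natsolve. Qed.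
Lemma Z_bnd i : (i < n)%N -> (hbZ i <= D)%N.
Proof. move=> *; rewrite /hbZ; case: ifP => *; lia. Qed.
Lemma Z_sum c : (c <= m)%N -> (\sum_(0 <= i < 4 * c) hbZ i = c * (2 * m + 2))%N.
Proof.
elim: c => [|c IH] Hc; first by rewrite big_nil.
rewrite (_ : (4 * c.+1 = (4 * c).+4)%N); last by lia.
do 4! rewrite big_nat_recr //=.
rewrite IH; last by lia.
rewrite /hbZ mulSn; repeat case: ifP; move=> *; lia.
Qed.
End FamZ.

Local Open Scope ring_scope.

Lemma famZ (R : realFieldType) m : (2 <= m)%N ->
  is_min_resolving (@fd (4 * m)) ((m * (2 * m + 2))%:R / (2 * m + 1)%:R : R).
Proof.
move=> Hm.
have D0 : (0 < 2 * m + 1)%N by lia.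
apply: (min_of (g0 := gmk (n := (4 * m)%N) (hR R (2 * m + 1) (hbZ m)) 0)).
- apply: inst_res => //.
  + exact: Z_NW.
  + exact: Z_NW0.
  + exact: Z_NS.
  + exact: Z_NS0.
  + exact: Z_NB.
  + exact: Z_NB0.
  + exact: Z_bnd.
  + apply: hub8 => //; first [exact: Z_NW | exact: Z_NW0 | exact: Z_NS | exact: Z_NS0
      | exact: Z_NB | exact: Z_NB0 | exact: Z_bnd | lia].
- by rewrite inst_sum Z_sum.
move=> g Hg.
have := lb0 (@fof0 R (4 * m) g) (cT Hg) (cT0 Hg ltac:(lia)) (cS Hg) (cS0 Hg ltac:(lia)) Hm erefl.
set S := \sum_(0 <= i < 4 * m) fof g i => h.
have Q0 : 0 < (2 * m + 1)%:R :> R by rewrite ltr0n.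
rewrite ler_pdivrMr // natrM.
have -> : (2 * m + 2)%:R = (2 * m + 1)%:R + 1 :> R by rewrite natr1; congr (_%:R); lia.
move: h; set Q : R := (2 * m + 1)%:R; move=> h; lra.
Qed.

Local Close Scope ring_scope.

Section FamO.
Variable k : nat.
Hypothesis Hk : (3 <= k)%N.
Definition hbO (i : nat) := if odd i then 0%N else 1%N.
Notation n := (2 * k + 1)%N.
Notation hN := (hN n hbO).
Lemma O_NW a : (1 <= a)%N -> (a.+1 < n)%N -> (2 <= hN a.-1 + hN a + hN a.+1 + hN a.+2)%N.
Proof. move=> *; rewrite /hbO; natsolve. Qed.
Lemma O_NS a : (1 <= a)%N -> (a.+2 < n)%N -> (2 <= hN a.-1 + hN a + hN a.+2 + hN a.+3)%N.
Proof. move=> *; rewrite /hbO; natsolve. Qed.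
Lemma O_NB a : (1 <= a)%N -> (a < n)%N -> (2 <= 2 * (hN a.-1 + hN a + hN a.+1))%N.
Proof. move=> *; rewrite /hbO; natsolve. Qed.
Lemma O_NW0 : (2 <= hN 0 + hN 1 + hN 2)%N.
Proof. rewrite /hbO; natsolve. Qed.
Lemma O_NS0 : (2 <= hN 0 + hN 2 + hN 3)%N.
Proof. rewrite /hbO; natsolve. Qed.
Lemma O_NB0 : (2 <= 2 * (hN 0 + hN 1))%N.
Proof. rewrite /hbO; natsolve. Qed.
Lemma O_bnd i : (i < n)%N -> (hbO i <= 2)%N.
Proof. by rewrite /hbO; case: ifP. Qed.
Lemma O_sum2 c : (\sum_(0 <= i < 2 * c) hbO i = c)%N.
Proof.
elim: c => [|c IH]; first by rewrite big_nil.
rewrite (_ : (2 * c.+1 = (2 * c).+2)%N); last by lia.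
do 2! rewrite big_nat_recr //=.
rewrite IH /hbO; repeat case: ifP; move=> *; lia.
Qed.
Lemma O_sum : (\sum_(0 <= i < n) hbO i = k.+1)%N.
Proof. rewrite addn1 big_nat_recr //= O_sum2 /hbO; case: ifP => *; lia. Qed.
End FamO.

Section FamT.
Variable m : nat.
Hypothesis Hm : (1 <= m)%N.
Notation n := (4 * m + 2)%N.
Definition hbT (i : nat) := if odd i && (i != n.-1) then 0%N else 1%N.
Notation hN := (hN n hbT).
Lemma T_NW a : (1 <= a)%N -> (a.+1 < n)%N -> (2 <= hN a.-1 + hN a + hN a.+1 + hN a.+2)%N.
Proof. move=> *; rewrite /hbT; natsolve. Qed.
Lemma T_NS a : (1 <= a)%N -> (a.+2 < n)%N -> (2 <= hN a.-1 + hN a + hN a.+2 + hN a.+3)%N.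
Proof. move=> *; rewrite /hbT; natsolve. Qed.
Lemma T_NB a : (1 <= a)%N -> (a < n)%N -> (2 <= 2 * (hN a.-1 + hN a + hN a.+1))%N.
Proof. move=> *; rewrite /hbT; natsolve. Qed.
Lemma T_NW0 : (2 <= hN 0 + hN 1 + hN 2)%N.
Proof. rewrite /hbT; natsolve. Qed.
Lemma T_NS0 : (2 <= hN 0 + hN 2 + hN 3)%N.
Proof. rewrite /hbT; natsolve. Qed.
Lemma T_NB0 : (2 <= 2 * (hN 0 + hN 1))%N.
Proof. rewrite /hbT; natsolve. Qed.
Lemma T_bnd i : (i < n)%N -> (hbT i <= 2)%N.
Proof. by rewrite /hbT; case: ifP. Qed.
Lemma T_sum2 c : (c <= 2 * m)%N -> (\sum_(0 <= i < 2 * c) hbT i = c)%N.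
Proof.
elim: c => [|c IH] Hc; first by rewrite big_nil.
rewrite (_ : (2 * c.+1 = (2 * c).+2)%N); last by lia.
do 2! rewrite big_nat_recr //=.
rewrite IH; last by lia.
rewrite /hbT; repeat case: ifP; move=> *; lia.
Qed.
Lemma T_sum : (\sum_(0 <= i < n) hbT i = (2 * m + 2))%N.
Proof.
rewrite (_ : (4 * m + 2 = (2 * (2 * m)).+2)%N); last by lia.
do 2! rewrite big_nat_recr //=.
rewrite T_sum2 // /hbT; repeat case: ifP; move=> *; lia.
Qed.
End FamT.

Ltac hubconc D0 s := apply: (@hub_via _ _ _ _ D0 _ s) => //;
  [ by move=> i _; rewrite /dd !inE; repeat case: ifP; move=> *; lia
  | by rewrite !big_cons big_nil /hN /= ].

Local Open Scope ring_scope.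

Lemma famO (R : realFieldType) k : (3 <= k)%N ->
  is_min_resolving (@fd (2 * k + 1)) ((k.+1)%:R / 2%:R : R).
Proof.
move=> Hk.
have D0 : (0 < 2)%N by [].
apply: (min_of (g0 := gmk (n := (2 * k + 1)%N) (hR R 2 hbO) 0)).
- apply: inst_res => //.
  + exact: O_NW.
  + exact: O_NW0.
  + exact: O_NS.
  + exact: O_NS0.
  + exact: O_NB.
  + exact: O_NB0.
  + exact: O_bnd.
  + case: (leqP 8 (2 * k + 1)) => n8.
      apply: hub8 => //; first [exact: O_NW | exact: O_NW0 | exact: O_NS | exact: O_NS0
        | exact: O_NB | exact: O_NB0 | exact: O_bnd | lia].
    have -> : k = 3%N by lia.
    move=> a; case: a => [|[|[|[|[|[|[|a]]]]]]] // _.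
    * hubconc D0 [:: 2; 4]%N.
    * hubconc D0 [:: 4; 6]%N.
    * hubconc D0 [:: 0; 4]%N.
    * hubconc D0 [:: 0; 6]%N.
    * hubconc D0 [:: 0; 2]%N.
    * hubconc D0 [:: 0; 2]%N.
    * hubconc D0 [:: 0; 2]%N.
- by rewrite inst_sum O_sum.
move=> g Hg.
Ltac feedH g Hg := first [exact: (cT Hg) | exact: (cT0 Hg ltac:(lia)) | exact: (cS Hg)
   | exact: (cS0 Hg ltac:(lia)) | exact: (@fof0 _ _ g) | exact: (Fp Hg) | lia].
have Q0 : 0 < 2%:R :> R by rewrite ltr0n.
rewrite ler_pdivrMr //.
case/orP: (orbN (odd k)) => ok.
- have h : ((k %/ 2 + 1)%:R <= \sum_(0 <= i < 2 * k + 1) fof g i).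
    by apply: lb3; feedH g Hg.
  apply: le_trans (_ : (k %/ 2 + 1)%:R * 2%:R <= _); last first.
    by rewrite ler_pM2r.
  by rewrite -natrM ler_nat; lia.
- have h : ((k %/ 2)%:R + 1 / 2 <= \sum_(0 <= i < 2 * k + 1) fof g i).
    by apply: lb1; feedH g Hg.
  apply: le_trans (_ : ((k %/ 2)%:R + 1 / 2) * 2%:R <= _); last first.
    by rewrite ler_pM2r.
  have -> : ((k %/ 2)%:R + 1 / 2) * 2%:R = (2 * (k %/ 2) + 1)%:R :> R.
    by rewrite natrD natrM mulr1n; field.
  rewrite ler_nat; lia.
Qed.

Lemma famT (R : realFieldType) m : (1 <= m)%N ->
  is_min_resolving (@fd (4 * m + 2)) ((2 * m + 2)%:R / 2%:R : R).
Proof.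
move=> Hm.
have D0 : (0 < 2)%N by [].
apply: (min_of (g0 := gmk (n := (4 * m + 2)%N) (hR R 2 (hbT m)) 0)).
- apply: inst_res => //.
  + exact: T_NW.
  + exact: T_NW0.
  + exact: T_NS.
  + exact: T_NS0.
  + exact: T_NB.
  + exact: T_NB0.
  + exact: T_bnd.
  + case: (leqP 8 (4 * m + 2)) => n8.
      apply: hub8 => //; first [exact: T_NW | exact: T_NW0 | exact: T_NS | exact: T_NS0
        | exact: T_NB | exact: T_NB0 | exact: T_bnd | lia].
    have -> : m = 1%N by lia.
    move=> a; case: a => [|[|[|[|[|[|a]]]]]] // _.
    * hubconc D0 [:: 2; 4]%N.
    * hubconc D0 [:: 4; 5]%N.
    * hubconc D0 [:: 0; 4]%N.
    * hubconc D0 [:: 0; 5]%N.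
    * hubconc D0 [:: 0; 2]%N.
    * hubconc D0 [:: 0; 2]%N.
- by rewrite inst_sum T_sum.
move=> g Hg.
have Q0 : 0 < 2%:R :> R by rewrite ltr0n.
rewrite ler_pdivrMr //.
have h : ((m + 1)%:R <= \sum_(0 <= i < 4 * m + 2) fof g i).
  by apply: lb2; feedH g Hg.
apply: le_trans (_ : (m + 1)%:R * 2%:R <= _); last first.
  by rewrite ler_pM2r.
by rewrite -natrM ler_nat; lia.
Qed.

Local Open Scope ring_scope.
Ltac expand := rewrite ?big_nat_recr //= ?big_geq //= ?add0r; try rewrite /Fh /=.
Ltac expandin h := rewrite ?big_nat_recr //= ?big_geq //= ?add0r in h.

Lemma small_gen (R : realFieldType) n (hs : seq R) (hv r : R) :
  (forall i, (i < n)%N -> 0 <= nth 0 hs i <= 1) -> 0 <= hv <= 1 ->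
  (forall a b, (a < b)%N -> (b < n)%N ->
     1 <= \sum_(0 <= i < n) (if dd a i != dd b i then Fh n (fun i => nth 0 hs i) i else 0)) ->
  (forall a, (a < n)%N ->
     1 <= \sum_(0 <= i < n) (if dd a i != 1%N then Fh n (fun i => nth 0 hs i) i else 0) + hv) ->
  \sum_(0 <= i < n) nth 0 hs i + hv = r ->
  (forall g : ('I_n + 'I_1)%type -> R, resolving_fun (@fd n) g ->
     r <= \sum_(0 <= i < n) fof g i + g (hub n)) ->
  is_min_resolving (@fd n) r.
Proof.
move=> H1 H2 H3 H4 H5 H6; split.
  exists (gmk (fun i => nth 0 hs i) hv); split; first exact: gmk_res.
  by rewrite sum_gmk.
by move=> g Hg; rewrite sumT; apply: H6.
Qed.

Lemma small1 (R : realFieldType) : is_min_resolving (@fd 1) ((1.+1)%:R / 2 : R).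
Proof.
apply: (small_gen (hs := [:: 1]) (hv := 0)).
- by case=> [|i] //= _; rewrite ler01 lexx.
- by rewrite ler01 lexx.
- by move=> a b ab bn; lia.
- case=> [|a] // _; expand; lra.
- expand; lra.
move=> g Hg; have h := cons_hub Hg (a := 0) isT; expandin h.
expand; lra.
Qed.

Ltac bnds := case=> [|[|[|[|[|?]]]]] //= _; apply/andP; split; lra.
Ltac prs := move=> [|[|[|[|[|?]]]]] [|[|[|[|[|?]]]]] ? ?;
  (try lia); expand; lra.
Ltac hbs := case=> [|[|[|[|[|?]]]]] => ?; (try lia); expand; lra.

Lemma small2 (R : realFieldType) : is_min_resolving (@fd 2) ((2.+1)%:R / 2 : R).
Proof.
apply: (small_gen (hs := [:: 1/2; 1/2]) (hv := 1/2)).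
- bnds.
- apply/andP; split; lra.
- prs.
- hbs.
- expand; lra.
move=> g Hg.
have h1 := cons_path Hg (a := 0) (b := 1) isT isT isT; expandin h1.
have h2 := cons_hub Hg (a := 0) isT; expandin h2.
have h3 := cons_hub Hg (a := 1) isT; expandin h3.
expand; lra.
Qed.

Lemma small3 (R : realFieldType) : is_min_resolving (@fd 3) ((3.+1)%:R / 2 : R).
Proof.
apply: (small_gen (hs := [:: 0; 0; 1]) (hv := 1)).
- bnds.
- apply/andP; split; lra.
- prs.
- hbs.
- expand; lra.
move=> g Hg.
have h1 := cons_path Hg (a := 0) (b := 2) isT isT isT; expandin h1.
have h2 := cons_hub Hg (a := 1) isT; expandin h2.
have p1 := Fp Hg 1; have p0 := Fp Hg 0; have p2 := Fp Hg 2.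
expand; lra.
Qed.

Lemma small4 (R : realFieldType) : is_min_resolving (@fd 4) (5 / 3 : R).
Proof.
apply: (small_gen (hs := [:: 1/3; 1/3; 1/3; 1/3]) (hv := 1/3)).
- bnds.
- apply/andP; split; lra.
- prs.
- hbs.
- expand; lra.
move=> g Hg.
have h1 := cons_path Hg (a := 0) (b := 1) isT isT isT; expandin h1.
have h2 := cons_path Hg (a := 0) (b := 2) isT isT isT; expandin h2.
have h3 := cons_hub Hg (a := 1) isT; expandin h3.
have h4 := cons_hub Hg (a := 2) isT; expandin h4.
expand; lra.
Qed.

Lemma small5 (R : realFieldType) : is_min_resolving (@fd 5) (5 / 3 : R).
Proof.
apply: (small_gen (hs := [:: 1/6; 1/3; 1/2; 1/3; 1/6]) (hv := 1/6)).
- bnds.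
- apply/andP; split; lra.
- prs.
- hbs.
- expand; lra.
move=> g Hg.
have h1 := cons_path Hg (a := 0) (b := 1) isT isT isT; expandin h1.
have h2 := cons_hub Hg (a := 1) isT; expandin h2.
have h3 := cons_hub Hg (a := 2) isT; expandin h3.
have h4 := cons_path Hg (a := 3) (b := 4) isT isT isT; expandin h4.
have h5 := cons_hub Hg (a := 3) isT; expandin h5.
expand; lra.
Qed.

Theorem theorem3p3 (R : realFieldType) (k : nat) (hk : (0 < k)%N) :
  (* (a) *)
  (forall n : nat, (1 <= n <= 3)%N ->
     both_dims n k ((n.+1)%:R / 2 : R)) /\
  (forall n : nat, (4 <= n <= 5)%N ->
     both_dims n k (5 / 3 : R)) /\
  (forall n : nat, (6 <= n)%N -> (n %% 4 == 1)%N || (n %% 4 == 3)%N ->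
     both_dims n k ((n.+1)%:R / 4 : R)) /\
  (forall n : nat, (6 <= n)%N -> (n %% 4 == 2)%N ->
     both_dims n k ((n.+2)%:R / 4 : R)) /\
  (* (b) *)
  (forall n : nat, (8 <= n)%N -> (n %% 4 == 0)%N ->
     exists v : R, both_dims n k v /\ n%:R / 4 <= v <= (n.+2)%:R / 4).
Proof.
split.
  move=> n Hn; apply: both_of => //.
  have : [|| n == 1, n == 2 | n == 3]%N by lia.
  by case/or3P => /eqP ->; [exact: small1 | exact: small2 | exact: small3].
split.
  move=> n Hn; apply: both_of => //.
  have : (n == 4)%N || (n == 5)%N by lia.
  by case/orP => /eqP ->; [exact: small4 | exact: small5].
split.
  move=> n H6 Hm; apply: both_of => //.
  have [j Ej] : exists j, n = (2 * j + 1)%N by exists (n %/ 2)%N; lia.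
  subst n.
  have -> : ((2 * j + 1).+1)%:R / 4 = (j.+1)%:R / 2%:R :> R.
    rewrite (_ : ((2 * j + 1).+1 = 2 * j.+1)%N); last by lia.
    by rewrite natrM; field.
  by apply: famO; lia.
split.
  move=> n H6 Hm; apply: both_of => //.
  have [j Ej] : exists j, n = (4 * j + 2)%N by exists (n %/ 4)%N; lia.
  subst n.
  have -> : ((4 * j + 2).+2)%:R / 4 = (2 * j + 2)%:R / 2%:R :> R.
    rewrite (_ : ((4 * j + 2).+2 = 2 * (2 * j + 2))%N); last by lia.
    by rewrite natrM; field.
  by apply: famT; lia.
move=> n H8 Hm.
have [j Ej] : exists j, n = (4 * j)%N by exists (n %/ 4)%N; lia.
subst n.
exists ((j * (2 * j + 2))%:R / (2 * j + 1)%:R); split.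
  by apply: both_of => //; apply: famZ; lia.
have Q0 : 0 < (2 * j + 1)%:R :> R by rewrite ltr0n; lia.
have F0 : 0 < 4 :> R by [].
apply/andP; split.
  rewrite ler_pdivlMr // mulrAC ler_pdivrMr // -!natrM ler_nat; nia.
rewrite ler_pdivrMr // mulrAC ler_pdivlMr // -!natrM ler_nat; nia.
Qed.
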